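(* Let $K$ be a perfect field, $k\subset K$ a subfield, and $\lambda\in\operatorname{Emb}(K)$ with $|\lambda^G|=n<\infty$. Let $\overline{\lambda}$ be an extension of $\lambda$ to $\overline{K}$, let $\overline{\mu}$ be the inverse of $\overline{\lambda}$, and let $\mu=\overline{\mu}|_K$. Then $\overline{\lambda}$ induces an isomorphism of two-sided vector spaces ${}_{\mu}(\mu(K)\vee K)_{\operatorname{id}}\to V(\lambda)$.
   Context: $\overline{K}$ is a fixed algebraic closure of $K$. A two-sided vector space is a $K\otimes_kK$-module. $\operatorname{Emb}(K)$ is the set of $k$-linear field embeddings $K\to\overline{K}$; $G=\operatorname{Aut}(\overline{K}/K)$ acts by left composition, with orbits $\lambda^G$. $K(\lambda)$ is the composite of $K$ and $\lambda(K)$ in $\overline{K}$, and $V(\lambda)$ is the two-sided vector space with underlying set $K(\lambda)$ and action $a\cdot v\cdot b=av\lambda(b)$. $\mu(K)\vee K$ denotes the composite of $\mu(K)$ and $K$ in $\overline{K}$. For $k$-linear embeddings $\gamma,\delta$ of $K$ into a field $L$, ${}_\gamma L_\delta$ is the two-sided vector space with underlying set $L$ and action $(a\otimes b)\cdot c=\gamma(a)\delta(b)c$. *)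

(* Defs.v *)
From HB Require Import structures.
From mathcomp Require Import all_boot all_order all_algebra.
Set Implicit Arguments. Unset Strict Implicit. Unset Printing Implicit Defensive.
Import GRing.Theory.
Local Open Scope ring_scope.

Definition is_subfield (F : fieldType) (S : F -> Prop) : Prop :=
  [/\ S 0, S 1, (forall x y, S x -> S y -> S (x - y)),
      (forall x y, S x -> S y -> S (x * y)) & (forall x, S x -> S x^-1)].

Definition ring_hom (R S : fieldType) (f : R -> S) : Prop :=
  [/\ (forall x y, f (x - y) = f x - f y), f 1 = 1 & (forall x y, f (x * y) = f x * f y)].

Definition img (A B : Type) (f : A -> B) : B -> Prop := fun y => exists a, y = f a.

Definition compositum (F : fieldType) (A B : F -> Prop) : F -> Prop :=
  fun x => forall S, is_subfield S -> (forall a, A a -> S a) ->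
                     (forall b, B b -> S b) -> S x.

Definition perfect_field (K : fieldType) : Prop :=
  [pchar K] =i pred0 \/
  (forall p, p \in [pchar K] -> forall x : K, exists y : K, y ^+ p = x).

(* Kbar is an algebraic closure of K (embedded via iota): algebraically
   closed (closedFieldType) and algebraic over iota(K). *)
Definition algebraic_over (K : fieldType) (Kbar : fieldType)
  (iota : {rmorphism K -> Kbar}) : Prop :=
  forall x : Kbar, exists p : {poly K}, p != 0 /\ root (map_poly iota p) x.

(* lam in Emb(K): k-linear field embedding K -> Kbar, i.e. a ring morphism
   agreeing with iota on the subfield k of K. *)
Definition is_emb (K Kbar : fieldType) (iota : {rmorphism K -> Kbar})
  (kS : K -> Prop) (lam : K -> Kbar) : Prop :=
  ring_hom lam /\ forall c, kS c -> lam c = iota c.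

(* sigma in G = Aut(Kbar / K): a bijective ring endomorphism fixing iota(K). *)
Definition in_AutK (K Kbar : fieldType) (iota : {rmorphism K -> Kbar})
  (sigma : Kbar -> Kbar) : Prop :=
  [/\ ring_hom sigma, bijective sigma & forall a, sigma (iota a) = iota a].

(* |lam^G| = n : the orbit {sigma o lam | sigma in G} has exactly n elements
   (functions compared extensionally). *)
Definition orbit_card (K Kbar : fieldType) (iota : {rmorphism K -> Kbar})
  (lam : K -> Kbar) (n : nat) : Prop :=
  exists f : 'I_n -> (K -> Kbar),
    [/\ (forall i j, f i =1 f j -> i = j),
        (forall i, exists sigma, in_AutK iota sigma /\ f i =1 sigma \o lam)
      & (forall sigma, in_AutK iota sigma -> exists i, f i =1 sigma \o lam)].

(* Two-sided vector spaces inside Kbar: carrier S : Kbar -> Prop with the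
   K (x)_k K action determined on pure tensors, act a b v = (a (x) b) . v. *)
(* V(lam): carrier K(lam), action a.v.b = a v lam(b). *)
Definition V_act (K Kbar : fieldType) (iota : {rmorphism K -> Kbar})
  (lam : K -> Kbar) (a b : K) (v : Kbar) : Kbar := iota a * v * lam b.
(* _gamma L _delta : action (a (x) b) . c = gamma(a) delta(b) c. *)
Definition twisted_act (K Kbar : fieldType) (gamma delta : K -> Kbar)
  (a b : K) (c : Kbar) : Kbar := gamma a * delta b * c.

Definition tsv_iso (K Kbar : fieldType)
  (S1 : Kbar -> Prop) (act1 : K -> K -> Kbar -> Kbar)
  (S2 : Kbar -> Prop) (act2 : K -> K -> Kbar -> Kbar) (f : Kbar -> Kbar) : Prop :=
  [/\ (forall x, S1 x -> S2 (f x)),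
      (forall y, S2 y -> exists x, S1 x /\ f x = y),
      (forall x y, S1 x -> S1 y -> f x = f y -> x = y),
      (forall x y, S1 x -> S1 y -> f (x + y) = f x + f y)
    & (forall a b x, S1 x -> f (act1 a b x) = act2 a b (f x))].

(* Main.v *)
Require Import Defs.
From HB Require Import structures.
From mathcomp Require Import all_boot all_order all_algebra.
Local Open Scope ring_scope.
Import GRing.Theory.

Lemma rh0 {R S : fieldType} {f : R -> S} : ring_hom f -> f 0 = 0.
Proof. by case=> Hs _ _; rewrite -(subrr 1) Hs subrr. Qed.

Lemma rhD {R S : fieldType} {f : R -> S} : ring_hom f -> forall x y, f (x + y) = f x + f y.
Proof.
move=> Hf x y; have H0 := rh0 Hf; case: Hf => Hs _ _.
have -> : x + y = x - (0 - y) by rewrite sub0r opprK.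
by rewrite !Hs H0 sub0r opprK.
Qed.

Lemma rhV {R S : fieldType} {f : R -> S} : ring_hom f -> forall x, f x^-1 = (f x)^-1.
Proof.
move=> Hf x; have H0 := rh0 Hf; case: Hf => Hs H1 Hm.
have [->|nx] := eqVneq x 0; first by rewrite invr0 H0 invr0.
have E : f x * f x^-1 = 1 by rewrite -Hm divff.
have nfx : f x != 0 by apply/eqP => h; move: E; rewrite h mul0r => /eqP; rewrite eq_sym oner_eq0.
by apply: (mulfI nfx); rewrite E divff.
Qed.

Lemma comp_map {F : fieldType} {f : F -> F} {A B C D : F -> Prop} {x} :
  ring_hom f -> (forall a, A a -> C (f a)) -> (forall b, B b -> D (f b)) ->
  compositum A B x -> compositum C D (f x).
Proof.
move=> Hf HA HB Hx S [S0 S1 Ss Sm Si] HC HD.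
have H0 := rh0 Hf; have HV := rhV Hf; case: Hf => Hs H1 Hm.
apply: (Hx (fun z => S (f z))).
- split; [by rewrite H0|by rewrite H1|by move=> u v *; rewrite Hs; apply: Ss
         |by move=> u v *; rewrite Hm; apply: Sm|by move=> u *; rewrite HV; apply: Si].
- by move=> a /HA /HC.
- by move=> b /HB /HD.
Qed.

Theorem lemma3p10 (K : fieldType) (Kbar : closedFieldType)
  (iota : {rmorphism K -> Kbar}) (kS : K -> Prop)
  (lam : K -> Kbar) (n : nat) (lambar mubar : Kbar -> Kbar) :
  perfect_field K ->
  algebraic_over iota ->
  is_subfield kS ->
  is_emb iota kS lam ->
  orbit_card iota lam n ->
  ring_hom lambar ->
  (forall a, lambar (iota a) = lam a) ->
  cancel lambar mubar -> cancel mubar lambar ->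
  let mu := fun a : K => mubar (iota a) in
  tsv_iso (compositum (img mu) (img iota)) (twisted_act mu iota)
          (compositum (img iota) (img lam)) (V_act iota lam)
          lambar.
Proof.
move=> _ _ _ _ _ Hl Hli lK mK mu.
have Hmu : ring_hom mubar.
  case: (Hl) => Hs H1 Hm; have Hi := can_inj lK.
  split.
  - by move=> x y; apply: Hi; rewrite Hs !mK.
  - by apply: Hi; rewrite H1 mK.
  - by move=> x y; apply: Hi; rewrite Hm !mK.
split.
- move=> x; apply: comp_map => //.
  + by move=> _ [a ->]; exists a; rewrite /mu mK.
  + by move=> _ [b ->]; exists b; rewrite Hli.
- move=> y Hy; exists (mubar y); split; last by rewrite mK.
  move: Hy; apply: comp_map => //.
  + by move=> _ [a ->]; exists a.
  + by move=> _ [b ->]; exists b; rewrite -Hli lK.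
- by move=> x y _ _ /(can_inj lK).
- by move=> x y _ _; apply: rhD.
- move=> a b x _; rewrite /twisted_act /V_act.
  case: (Hl) => _ _ Hm.
  by rewrite !Hm /mu mK Hli mulrAC.
Qed.
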